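(* Consider the dispersionless Kadomtsev–Petviashvili (dKP) equation written as the two-component first-order system $$u_t=uu_x+w_y,\qquad u_y=w_x$$ for $u(x,y,t)$, $w(x,y,t)$. Two-phase solutions of this system, i.e. solutions for which $(u,w)$ satisfy a pair of commuting two-component hydrodynamic-type systems $(u,w)^T_t=A(u,w)(u,w)^T_x$, $(u,w)^T_y=B(u,w)(u,w)^T_x$ (compatible with the dKP system) and are given implicitly by the generalised hodograph formula $x\,I+t\,A(u,w)+y\,B(u,w)=C(u,w)$, where $(u,w)^T_\tau=C(u,w)(u,w)^T_x$ is a further flow commuting with both, are given by the implicit formulae $$x+(z_u+u)t=m_u,\qquad y+z_w t=m_w,$$ where the functions $z(u,w)$ and $m(u,w)$ satisfy the PDEs $$z_{uu}+z_wz_{uw}-z_uz_{ww}+1=0,\qquad m_{uu}+z_wm_{uw}-z_um_{ww}=0 .$$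
   Context: Subscripts denote partial derivatives. $I$ is the $2\times 2$ identity matrix. Two-phase solutions are the solutions obtained from two-component hydrodynamic reductions, with the general solution of such a reduction given by Tsarev's generalised hodograph formula as described in the claim. *)

(* Defs.v *)
From Stdlib Require Import Reals.
From Coquelicot Require Import Coquelicot.
Open Scope R_scope.

Definition d_u (f : R -> R -> R) (u w : R) : R := Derive (fun s => f s w) u.
Definition d_w (f : R -> R -> R) (u w : R) : R := Derive (fun s => f u s) w.
Definition d_x (f : R -> R -> R -> R) (x y t : R) : R := Derive (fun s => f s y t) x.
Definition d_y (f : R -> R -> R -> R) (x y t : R) : R := Derive (fun s => f x s t) y.
Definition d_t (f : R -> R -> R -> R) (x y t : R) : R := Derive (fun s => f x y s) t.

Definition open2 (D : R -> R -> Prop) : Prop :=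
  forall u w, D u w -> exists e, 0 < e /\
    forall u' w', Rabs (u' - u) < e -> Rabs (w' - w) < e -> D u' w'.
Definition convex2 (D : R -> R -> Prop) : Prop :=
  forall u1 w1 u2 w2 s, D u1 w1 -> D u2 w2 -> 0 <= s <= 1 ->
    D ((1 - s) * u1 + s * u2) ((1 - s) * w1 + s * w2).
Definition open3 (O : R -> R -> R -> Prop) : Prop :=
  forall x y t, O x y t -> exists e, 0 < e /\
    forall x' y' t', Rabs (x' - x) < e -> Rabs (y' - y) < e -> Rabs (t' - t) < e ->
      O x' y' t'.

Record M2 := mkM2 { e11 : R; e12 : R; e21 : R; e22 : R }.

Definition mmul (P Q : M2) : M2 :=
  mkM2 (e11 P * e11 Q + e12 P * e21 Q) (e11 P * e12 Q + e12 P * e22 Q)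
       (e21 P * e11 Q + e22 P * e21 Q) (e21 P * e12 Q + e22 P * e22 Q).

Definition mapp (P : M2) (v : R * R) : R * R :=
  (e11 P * fst v + e12 P * snd v, e21 P * fst v + e22 P * snd v).

Definition vadd (v v' : R * R) : R * R := (fst v + fst v', snd v + snd v').

Definition Mfield := R -> R -> M2.

Definition ddir (A : Mfield) (u w : R) (eta : R * R) : M2 :=
  let dd (f : M2 -> R) := fst eta * d_u (fun a b => f (A a b)) u w
                        + snd eta * d_w (fun a b => f (A a b)) u w in
  mkM2 (dd e11) (dd e12) (dd e21) (dd e22).

Definition C1on (D : R -> R -> Prop) (f : R -> R -> R) : Prop :=
  forall u w, D u w ->
    ex_derive (fun s => f s w) u /\ ex_derive (fun s => f u s) w /\
    continuity_2d_pt f u w /\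
    continuity_2d_pt (d_u f) u w /\ continuity_2d_pt (d_w f) u w.

Definition C1field (D : R -> R -> Prop) (A : Mfield) : Prop :=
  C1on D (fun u w => e11 (A u w)) /\ C1on D (fun u w => e12 (A u w)) /\
  C1on D (fun u w => e21 (A u w)) /\ C1on D (fun u w => e22 (A u w)).

(* The hydrodynamic-type flows U_t = A(U) U_x and U_tau = C(U) U_x commute
   (U_{t tau} = U_{tau t} identically, i.e. for arbitrary U_x = xi and U_xx):
     A C = C A   and   A'[C xi] xi + A C'[xi] xi = C'[A xi] xi + C A'[xi] xi. *)
Definition commuting (D : R -> R -> Prop) (A C : Mfield) : Prop :=
  forall u w, D u w ->
    mmul (A u w) (C u w) = mmul (C u w) (A u w) /\
    forall xi : R * R,
      vadd (mapp (ddir A u w (mapp (C u w) xi)) xi)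
           (mapp (A u w) (mapp (ddir C u w xi) xi))
      = vadd (mapp (ddir C u w (mapp (A u w) xi)) xi)
             (mapp (C u w) (mapp (ddir A u w xi) xi)).

(* The pair U_t = A U_x, U_y = B U_x is a reduction of (compatible with) the
   dKP system u_t = u u_x + w_y, u_y = w_x, i.e. every solution of the pair
   solves dKP: first row of B is (0,1), first row of A is (u + B21, B22). *)
Definition dKP_compatible (D : R -> R -> Prop) (A B : Mfield) : Prop :=
  forall u w, D u w ->
    e11 (B u w) = 0 /\ e12 (B u w) = 1 /\
    e11 (A u w) = u + e21 (B u w) /\ e12 (A u w) = e22 (B u w).

Definition dKP_solution (O : R -> R -> R -> Prop) (u w : R -> R -> R -> R) : Prop :=
  forall x y t, O x y t ->
    (ex_derive (fun s => u s y t) x /\ ex_derive (fun s => u x s t) y /\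
     ex_derive (fun s => u x y s) t /\
     ex_derive (fun s => w s y t) x /\ ex_derive (fun s => w x s t) y /\
     ex_derive (fun s => w x y s) t) /\
    d_t u x y t = u x y t * d_x u x y t + d_y w x y t /\
    d_y u x y t = d_x w x y t.

Definition hydro_flow (O : R -> R -> R -> Prop) (u w : R -> R -> R -> R)
    (ds : (R -> R -> R -> R) -> R -> R -> R -> R) (A : Mfield) : Prop :=
  forall x y t, O x y t ->
    (ds u x y t, ds w x y t)
    = mapp (A (u x y t) (w x y t)) (d_x u x y t, d_x w x y t).

Definition hodograph (O : R -> R -> R -> Prop) (u w : R -> R -> R -> R)
    (A B C : Mfield) : Prop :=
  forall x y t, O x y t ->
    let P := A (u x y t) (w x y t) in
    let Q := B (u x y t) (w x y t) in
    let S := C (u x y t) (w x y t) in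
    x + t * e11 P + y * e11 Q = e11 S /\
    t * e12 P + y * e12 Q = e12 S /\
    t * e21 P + y * e21 Q = e21 S /\
    x + t * e22 P + y * e22 Q = e22 S.

Definition two_phase_solution (D : R -> R -> Prop) (O : R -> R -> R -> Prop)
    (u w : R -> R -> R -> R) : Prop :=
  exists A B C : Mfield,
    C1field D A /\ C1field D B /\ C1field D C /\
    dKP_compatible D A B /\
    commuting D A B /\ commuting D A C /\ commuting D B C /\
    (forall x y t, O x y t -> D (u x y t) (w x y t)) /\
    dKP_solution O u w /\
    hydro_flow O u w d_t A /\ hydro_flow O u w d_y B /\
    hodograph O u w A B C.

Definition twice_diff (D : R -> R -> Prop) (f : R -> R -> R) : Prop :=
  forall u w, D u w ->
    ex_derive (fun s => f s w) u /\ ex_derive (fun s => f u s) w /\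
    ex_derive (fun s => d_u f s w) u /\ ex_derive (fun s => d_u f u s) w /\
    ex_derive (fun s => d_w f u s) w.

(* Main.v *)
Require Import Defs.
From Stdlib Require Import Reals Lra Classical.
From Coquelicot Require Import Coquelicot.
Open Scope R_scope.

Lemma is_derive_eq (f : R -> R) x l l' : is_derive f x l -> l = l' -> is_derive f x l'.
Proof. intros H ->; exact H. Qed.

Lemma deriv_lin_comb (P Q : R -> R) x u0 c dP dQ : is_derive P x dP -> is_derive Q x dQ ->
  is_derive (fun y => (y-u0)*P y + c*Q y) x (P x + (x-u0)*dP + c*dQ).
Proof.
intros HP HQ.
eapply is_derive_eq.
apply @is_derive_plus. apply @is_derive_mult. apply @is_derive_minus. apply is_derive_id. apply is_derive_const. exact HP.
intros; apply Rmult_comm.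
apply @is_derive_mult. apply is_derive_const. exact HQ. intros; apply Rmult_comm.
cbn. ring.
Qed.

Lemma deriv_sP (P : R -> R) x dP : is_derive P x dP -> is_derive (fun s => s * P s) x (P x + x * dP).
Proof. intros HP. eapply is_derive_eq. apply @is_derive_mult. apply is_derive_id. exact HP.
  intros; apply Rmult_comm. cbn; ring. Qed.

Lemma deriv_lin (u0 s x : R) : is_derive (fun y => u0 + s*(y-u0)) x s.
Proof. auto_derive; auto; ring. Qed.

Lemma deriv_lin' (u0 a x : R) : is_derive (fun s => u0 + s*(a-u0)) x (a - u0).
Proof. auto_derive; auto; ring. Qed.

Lemma deriv_comp1 (p : R -> R -> R) u0 s W x :
  ex_derive (fun t => p t W) (u0 + s*(x-u0)) ->
  is_derive (fun y => p (u0 + s*(y-u0)) W) x (s * d_u p (u0 + s*(x-u0)) W).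
Proof. intros H. eapply is_derive_eq.
  apply (is_derive_comp (fun t => p t W) (fun y => u0 + s*(y-u0))).
  apply Derive_correct; exact H. apply deriv_lin. cbn. unfold d_u. ring. Qed.

Lemma open_loc1 D a b : open2 D -> D a b -> locally a (fun s => D s b).
Proof. intros HD Hab. destruct (HD a b Hab) as [e [He H]].
  exists (mkposreal e He). intros y Hy. apply H. exact Hy.
  rewrite Rminus_eq_0, Rabs_R0; exact He. Qed.

Lemma open_loc2 D a b : open2 D -> D a b -> locally b (fun s => D a s).
Proof. intros HD Hab. destruct (HD a b Hab) as [e [He H]].
  exists (mkposreal e He). intros y Hy. apply H.
  rewrite Rminus_eq_0, Rabs_R0; exact He. exact Hy. Qed.

Lemma cont2_comp (g F G : R -> R -> R) x y :
  continuity_2d_pt g (F x y) (G x y) -> continuity_2d_pt F x y -> continuity_2d_pt G x y ->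
  continuity_2d_pt (fun a b => g (F a b) (G a b)) x y.
Proof.
  intros Hg HF HG eps.
  destruct (Hg eps) as [d1 H1].
  destruct (HF d1) as [d2 H2]. destruct (HG d1) as [d3 H3].
  exists (mkposreal (Rmin d2 d3) (Rmin_pos _ _ (cond_pos d2) (cond_pos d3))).
  intros u v Hu Hv. simpl in Hu, Hv.
  assert (A1 := Rmin_l d2 d3). assert (A2 := Rmin_r d2 d3).
  apply H1. apply H2; lra. apply H3; lra.
Qed.

Lemma loc2_D D (F G : R -> R -> R) x y : open2 D -> continuity_2d_pt F x y ->
  continuity_2d_pt G x y -> D (F x y) (G x y) -> locally_2d (fun u v => D (F u v) (G u v)) x y.
Proof. intros HD HF HG Hxy. destruct (HD _ _ Hxy) as [e [He H]].
  destruct (HF (mkposreal e He)) as [d2 H2]. destruct (HG (mkposreal e He)) as [d3 H3].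
  exists (mkposreal (Rmin d2 d3) (Rmin_pos _ _ (cond_pos d2) (cond_pos d3))).
  intros u v Hu Hv. simpl in Hu, Hv.
  assert (A1 := Rmin_l d2 d3). assert (A2 := Rmin_r d2 d3).
  apply H. apply (H2 u v); lra. apply (H3 u v); lra.
Qed.

Lemma cont2_fix1 F x y : continuity_2d_pt F x y -> continuous (fun s => F x s) y.
Proof. intros H. apply filterlim_locally. intros eps. destruct (H eps) as [d Hd].
  exists d. intros s Hs. apply Hd. rewrite Rminus_eq_0, Rabs_R0; apply cond_pos. exact Hs. Qed.

Lemma cont2_swap f x y : continuity_2d_pt f x y -> continuity_2d_pt (fun a b => f b a) y x.
Proof. intros H eps. destruct (H eps) as [d Hd]. exists d. intros u v Hu Hv. apply Hd; assumption. Qed.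

Ltac cont2 := repeat first [ apply continuity_2d_pt_plus | apply continuity_2d_pt_minus
  | apply continuity_2d_pt_mult | apply continuity_2d_pt_id1 | apply continuity_2d_pt_id2
  | apply continuity_2d_pt_const ].

Lemma C1_diff D f x y : open2 D -> C1on D f -> D x y ->
  differentiable_pt_lim f x y (d_u f x y) (d_w f x y).
Proof.
  intros HD Hf Hxy eps.
  destruct (HD _ _ Hxy) as [e [He HDe]].
  destruct (Hf _ _ Hxy) as [_ [_ [_ [Cu Cw]]]].
  assert (He2: 0 < eps/2) by (destruct eps; simpl; lra).
  destruct (Cu (mkposreal _ He2)) as [d1 H1].
  destruct (Cw (mkposreal _ He2)) as [d2 H2].
  assert (Hd : 0 < Rmin (e/2) (Rmin d1 d2)).
  { apply Rmin_pos. lra. apply Rmin_pos; apply cond_pos. }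
  exists (mkposreal _ Hd). intros u v Hu Hv. simpl in Hu, Hv, H1, H2.
  assert (B1 := Rmin_l (e/2) (Rmin d1 d2)). assert (B2 := Rmin_r (e/2) (Rmin d1 d2)).
  assert (B3 := Rmin_l d1 d2). assert (B4 := Rmin_r d1 d2).
  destruct (MVT_cor4 (fun s => f s v) (fun c => d_u f c v) x (Rabs (u-x))) with (b:=u)
    as [c [Hc1 Hc2]].
  { intros c Hc. apply Derive_correct. apply (Hf c v). apply HDe; lra. }
  { lra. }
  destruct (MVT_cor4 (fun s => f x s) (fun c => d_w f x c) y (Rabs (v-y))) with (b:=v)
    as [c' [Hc1' Hc2']].
  { intros c0 Hc. apply Derive_correct. apply (Hf x c0). apply HDe.
    rewrite Rminus_eq_0, Rabs_R0; lra. lra. }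
  { lra. }
  assert (E1: Rabs (d_u f c v - d_u f x y) < eps/2) by (apply H1; lra).
  assert (E2: Rabs (d_w f x c' - d_w f x y) < eps/2).
  { apply H2. rewrite Rminus_eq_0, Rabs_R0; lra. lra. }
  replace (f u v - f x y - (d_u f x y * (u - x) + d_w f x y * (v - y))) with
    ((d_u f c v - d_u f x y)*(u-x) + (d_w f x c' - d_w f x y)*(v-y)).
  2: { replace (f u v - f x y) with ((f u v - f x v) + (f x v - f x y)) by ring.
       rewrite Hc1, Hc1'. ring. }
  eapply Rle_trans; [apply Rabs_triang|]. rewrite !Rabs_mult.
  assert (M1 := Rmax_l (Rabs (u - x)) (Rabs (v - y))).
  assert (M2 := Rmax_r (Rabs (u - x)) (Rabs (v - y))).
  assert (P1 := Rabs_pos (u-x)). assert (P2 := Rabs_pos (v-y)).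
  assert (P3 := Rabs_pos (d_u f c v - d_u f x y)). assert (P4 := Rabs_pos (d_w f x c' - d_w f x y)).
  set (M := Rmax (Rabs (u - x)) (Rabs (v - y))) in *.
  simpl. nra.
Qed.

Definition pot (p q : R -> R -> R) (u0 w0 a b : R) : R :=
  RInt (fun s => (a-u0) * p (u0 + s*(a-u0)) (w0 + s*(b-w0))
               + (b-w0) * q (u0 + s*(a-u0)) (w0 + s*(b-w0))) 0 1.

Lemma seg_in D u0 w0 a b s : convex2 D -> D u0 w0 -> D a b -> 0 <= s <= 1 ->
  D (u0 + s*(a-u0)) (w0 + s*(b-w0)).
Proof. intros Hc H0 H1 Hs. replace (u0 + s*(a-u0)) with ((1-s)*u0 + s*a) by ring.
  replace (w0 + s*(b-w0)) with ((1-s)*w0 + s*b) by ring. apply Hc; auto. Qed.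

Lemma half D p q u0 w0 : open2 D -> convex2 D -> D u0 w0 -> C1on D p -> C1on D q ->
  (forall a b, D a b -> d_w p a b = d_u q a b) ->
  forall a b, D a b -> is_derive (fun x => pot p q u0 w0 x b) a (p a b).
Proof.
  intros HDo HDc H0 Cp Cq Hcurl a b Hab.
  set (F := fun x s => (x-u0) * p (u0 + s*(x-u0)) (w0 + s*(b-w0))
                     + (b-w0) * q (u0 + s*(x-u0)) (w0 + s*(b-w0))).
  set (G := fun x s => p (u0 + s*(x-u0)) (w0 + s*(b-w0))
     + (x-u0) * (s * d_u p (u0 + s*(x-u0)) (w0 + s*(b-w0)))
     + (b-w0) * (s * d_u q (u0 + s*(x-u0)) (w0 + s*(b-w0)))).
  assert (derF : forall x s, D (u0 + s*(x-u0)) (w0 + s*(b-w0)) -> is_derive (fun y => F y s) x (G x s)).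
  { intros x s Hxs. unfold F, G.
    apply (deriv_lin_comb (fun y => p (u0 + s*(y-u0)) (w0 + s*(b-w0)))
                          (fun y => q (u0 + s*(y-u0)) (w0 + s*(b-w0)))).
    apply deriv_comp1. apply (Cp _ _ Hxs). apply deriv_comp1; apply (Cq _ _ Hxs). }
  assert (cg1 : forall x s, continuity_2d_pt (fun x s => u0 + s*(x-u0)) x s) by (intros; cont2).
  assert (cg2 : forall x s, continuity_2d_pt (fun x s => w0 + s*(b-w0)) x s) by (intros; cont2).
  assert (ccomp : forall (h : R -> R -> R) x s, (forall a b, D a b -> continuity_2d_pt h a b) ->
     D (u0 + s*(x-u0)) (w0 + s*(b-w0)) ->
     continuity_2d_pt (fun x s => h (u0 + s*(x-u0)) (w0 + s*(b-w0))) x s).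
  { intros h x s Hh Hxs. apply (cont2_comp h (fun x s => u0 + s*(x-u0)) (fun x s => w0 + s*(b-w0))).
    apply Hh; exact Hxs. apply cg1. apply cg2. }
  assert (cp : forall a b, D a b -> continuity_2d_pt p a b) by (intros; apply Cp; auto).
  assert (cq : forall a b, D a b -> continuity_2d_pt q a b) by (intros; apply Cq; auto).
  assert (cpu : forall a b, D a b -> continuity_2d_pt (d_u p) a b) by (intros; apply Cp; auto).
  assert (cpw : forall a b, D a b -> continuity_2d_pt (d_w p) a b) by (intros; apply Cp; auto).
  assert (cqu : forall a b, D a b -> continuity_2d_pt (d_u q) a b) by (intros; apply Cq; auto).
  assert (cF : forall x s, D (u0 + s*(x-u0)) (w0 + s*(b-w0)) -> continuity_2d_pt F x s).
  { intros x s Hxs. unfold F. cont2; apply ccomp; auto. }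
  assert (cG : forall x s, D (u0 + s*(x-u0)) (w0 + s*(b-w0)) -> continuity_2d_pt G x s).
  { intros x s Hxs. unfold G. cont2; apply ccomp; auto. }
  assert (L1: locally a (fun x => forall t, Rmin 0 1 <= t <= Rmax 0 1 -> ex_derive (fun y => F y t) x)).
  { destruct (open_loc1 D a b HDo Hab) as [e He]. exists e. intros x Hx t Ht.
    rewrite Rmin_left, Rmax_right in Ht by lra. eexists. apply derF. apply seg_in; auto. }
  assert (L2: forall t, Rmin 0 1 <= t <= Rmax 0 1 ->
     continuity_2d_pt (fun x v => Derive (fun z => F z v) x) a t).
  { intros t Ht. rewrite Rmin_left, Rmax_right in Ht by lra.
    assert (Hin : D (u0 + t*(a-u0)) (w0 + t*(b-w0))) by (apply seg_in; auto).
    apply continuity_2d_pt_ext_loc with (f := G).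
    - destruct (loc2_D D _ _ a t HDo (cg1 a t) (cg2 a t) Hin) as [d Hd]. exists d.
      intros x v Hx Hv. symmetry. apply is_derive_unique. apply derF. apply (Hd x v Hx Hv).
    - apply cG; exact Hin. }
  assert (L3: locally a (fun y => ex_RInt (fun t => F y t) 0 1)).
  { destruct (open_loc1 D a b HDo Hab) as [e He]. exists e. intros y Hy.
    apply (@ex_RInt_continuous R_CompleteNormedModule). intros t Ht. rewrite Rmin_left, Rmax_right in Ht by lra.
    apply (cont2_fix1 F y t). apply cF. apply seg_in; auto. }
  pose proof (is_derive_RInt_param F 0 1 a L1 L2 L3) as HR.
  unfold pot. eapply is_derive_eq; [exact HR |].
  set (H_ := fun t => p (u0 + t*(a-u0)) (w0 + t*(b-w0)) + t * ((a-u0) * d_u p (u0 + t*(a-u0)) (w0 + t*(b-w0))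
           + (b-w0) * d_w p (u0 + t*(a-u0)) (w0 + t*(b-w0)))).
  transitivity (RInt H_ 0 1).
  { apply RInt_ext. intros t Ht. rewrite Rmin_left, Rmax_right in Ht by lra.
    assert (Hin : D (u0 + t*(a-u0)) (w0 + t*(b-w0))) by (apply seg_in; auto; lra).
    transitivity (G a t). { apply is_derive_unique. apply (derF a t Hin). } unfold G, H_.
    match goal with |- ?x = ?y => change (@eq R x y) end.
    rewrite (Hcurl _ _ Hin). ring. }
  set (FF := fun t => t * p (u0 + t*(a-u0)) (w0 + t*(b-w0))).
  assert (HF: is_RInt H_ 0 1 (minus (FF 1) (FF 0))).
  { apply (@is_RInt_derive R_CompleteNormedModule).
    - intros t Ht. rewrite Rmin_left, Rmax_right in Ht by lra.
      assert (Hin : D (u0 + t*(a-u0)) (w0 + t*(b-w0))) by (apply seg_in; auto).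
      unfold FF, H_. apply (deriv_sP (fun s => p (u0 + s*(a-u0)) (w0 + s*(b-w0)))).
      eapply is_derive_eq. apply is_derive_Reals.
      apply (derivable_pt_lim_comp_2d p (fun s => u0+s*(a-u0)) (fun s => w0 + s*(b-w0))).
      apply (C1_diff D p _ _ HDo Cp Hin).
      apply is_derive_Reals, deriv_lin'. apply is_derive_Reals, deriv_lin'.
      match goal with |- ?x = ?y => change (@eq R x y) end. ring.
    - intros t Ht. rewrite Rmin_left, Rmax_right in Ht by lra.
      assert (Hin : D (u0 + t*(a-u0)) (w0 + t*(b-w0))) by (apply seg_in; auto).
      apply (cont2_fix1 (fun x s => p (u0 + s*(x-u0)) (w0 + s*(b-w0)) + s * ((x-u0) * d_u p (u0 + s*(x-u0)) (w0 + s*(b-w0))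
           + (b-w0) * d_w p (u0 + s*(x-u0)) (w0 + s*(b-w0))))).
      cont2; apply ccomp; auto. }
  rewrite (is_RInt_unique _ _ _ _ HF). unfold FF. cbn.
  replace (u0 + 1*(a-u0)) with a by ring. replace (w0 + 1*(b-w0)) with b by ring. ring.
Qed.

Lemma poincare D p q : open2 D -> convex2 D -> C1on D p -> C1on D q ->
  (forall a b, D a b -> d_w p a b = d_u q a b) ->
  exists z : R -> R -> R, forall a b, D a b ->
    is_derive (fun s => z s b) a (p a b) /\ is_derive (fun s => z a s) b (q a b).
Proof.
  intros HDo HDc Cp Cq Hcurl.
  destruct (classic (exists u0 w0, D u0 w0)) as [[u0 [w0 H0]] | Hne].
  2: { exists (fun _ _ => 0). intros a b Hab. exfalso; apply Hne; eauto. }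
  exists (pot p q u0 w0). intros a b Hab. split.
  - apply (half D p q u0 w0); auto.
  - set (D' := fun x y => D y x). set (p' := fun x y => q y x). set (q' := fun x y => p y x).
    assert (H' := half D' p' q' w0 u0).
    apply (is_derive_ext (fun x => pot p' q' w0 u0 x a)).
    + intros t. unfold pot, p', q'. apply RInt_ext. intros s _. cbv beta.
      match goal with |- ?x = ?y => change (@eq R x y) end. ring.
    + apply H'.
      * intros x y Hxy. destruct (HDo y x Hxy) as [e [He H]]. exists e; split; auto.
        intros u' w' H1 H2. apply H; auto.
      * intros u1 w1 u2 w2 s H1 H2 Hs. apply HDc; auto.
      * exact H0.
      * intros x y Hxy. destruct (Cq y x Hxy) as [h1 [h2 [h3 [h4 h5]]]].
        split; [exact h2|]. split; [exact h1|]. split; [exact (cont2_swap _ _ _ h3)|].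
        split; [exact (cont2_swap _ _ _ h5)| exact (cont2_swap _ _ _ h4)].
      * intros x y Hxy. destruct (Cp y x Hxy) as [h1 [h2 [h3 [h4 h5]]]].
        split; [exact h2|]. split; [exact h1|]. split; [exact (cont2_swap _ _ _ h3)|].
        split; [exact (cont2_swap _ _ _ h5)| exact (cont2_swap _ _ _ h4)].
      * intros x y Hxy. exact (eq_sym (Hcurl y x Hxy)).
      * exact Hab.
Qed.


Lemma du_loc D (f g : R -> R -> R) a b : open2 D -> D a b ->
  (forall x y, D x y -> f x y = g x y) -> d_u f a b = d_u g a b.
Proof. intros HD Hab H. unfold d_u. apply Derive_ext_loc.
  destruct (open_loc1 D a b HD Hab) as [e He]. exists e. intros y Hy. apply H, He, Hy. Qed.
Lemma dw_loc D (f g : R -> R -> R) a b : open2 D -> D a b ->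
  (forall x y, D x y -> f x y = g x y) -> d_w f a b = d_w g a b.
Proof. intros HD Hab H. unfold d_w. apply Derive_ext_loc.
  destruct (open_loc2 D a b HD Hab) as [e He]. exists e. intros y Hy. apply H, He, Hy. Qed.

Lemma du_plus (f g : R -> R -> R) a b : ex_derive (fun s => f s b) a -> ex_derive (fun s => g s b) a ->
  d_u (fun x y => f x y + g x y) a b = d_u f a b + d_u g a b.
Proof. intros; unfold d_u; apply (Derive_plus (fun s => f s b) (fun s => g s b)); auto. Qed.
Lemma dw_plus (f g : R -> R -> R) a b : ex_derive (fun s => f a s) b -> ex_derive (fun s => g a s) b ->
  d_w (fun x y => f x y + g x y) a b = d_w f a b + d_w g a b.
Proof. intros; unfold d_w; apply (Derive_plus (fun s => f a s) (fun s => g a s)); auto. Qed.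
Lemma du_mult (f g : R -> R -> R) a b : ex_derive (fun s => f s b) a -> ex_derive (fun s => g s b) a ->
  d_u (fun x y => f x y * g x y) a b = d_u f a b * g a b + f a b * d_u g a b.
Proof. intros; unfold d_u; apply (Derive_mult (fun s => f s b) (fun s => g s b)); auto. Qed.
Lemma dw_mult (f g : R -> R -> R) a b : ex_derive (fun s => f a s) b -> ex_derive (fun s => g a s) b ->
  d_w (fun x y => f x y * g x y) a b = d_w f a b * g a b + f a b * d_w g a b.
Proof. intros; unfold d_w; apply (Derive_mult (fun s => f a s) (fun s => g a s)); auto. Qed.
Lemma du_id a b : d_u (fun x y => x) a b = 1.
Proof. unfold d_u. apply Derive_id. Qed.
Lemma dw_id a b : d_w (fun x y => x) a b = 0.
Proof. unfold d_w. apply Derive_const. Qed.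
Lemma du_cst c a b : d_u (fun x y => c) a b = 0.
Proof. unfold d_u. apply Derive_const. Qed.
Lemma dw_cst c a b : d_w (fun x y => c) a b = 0.
Proof. unfold d_w. apply Derive_const. Qed.

Lemma exd_id (x : R) : ex_derive (fun s : R => s) x.
Proof. apply ex_derive_id. Qed.
Lemma exd_plus (f g : R -> R) x : ex_derive f x -> ex_derive g x -> ex_derive (fun s => f s + g s) x.
Proof. intros; apply (ex_derive_plus f g); auto. Qed.
Lemma exd_mult (f g : R -> R) x : ex_derive f x -> ex_derive g x -> ex_derive (fun s => f s * g s) x.
Proof. intros; apply (ex_derive_mult f g); auto. Qed.
Ltac exd := repeat first [ apply exd_plus | apply exd_mult | apply exd_id | assumption ].

Lemma keyAB D A B : open2 D -> C1on D (fun x y => e21 (B x y)) -> C1on D (fun x y => e22 (B x y)) ->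
  commuting D A B -> dKP_compatible D A B -> forall a b, D a b ->
  d_w (fun x y => e21 (B x y)) a b = d_u (fun x y => e22 (B x y)) a b /\
  d_u (fun x y => e21 (B x y)) a b + e22 (B a b) * d_w (fun x y => e21 (B x y)) a b
  - e21 (B a b) * d_w (fun x y => e22 (B x y)) a b + 1 = 0.
Proof.
intros HDo Cp Cq cAB Hcp.
  assert (KA : forall a b, D a b -> e11 (A a b) = a + e21 (B a b) /\ e12 (A a b) = e22 (B a b) /\
     e21 (A a b) = e22 (B a b) * e21 (B a b) /\ e22 (A a b) = a + (e21 (B a b) + e22 (B a b) * e22 (B a b))).
  { intros a b Hab. destruct (Hcp a b Hab) as [h1 [h2 [h3 h4]]].
    destruct (cAB a b Hab) as [E _].
    pose proof (f_equal e11 E) as E1. pose proof (f_equal e12 E) as E2. simpl in E1, E2.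
    rewrite h1, h2 in E1, E2. rewrite h3, h4 in *.
    split; [auto|]. split; [auto|]. split; nra. }
intros a b Hab.
destruct (Cp a b Hab) as [pu [pw _]]. destruct (Cq a b Hab) as [qu [qw _]].
set (P := fun x y => e21 (B x y)). set (Q := fun x y => e22 (B x y)).
assert (FA11u : d_u (fun x y => e11 (A x y)) a b = 1 + d_u P a b).
{ rewrite (du_loc D _ (fun x y => x + P x y) a b HDo Hab) by (intros; apply KA; auto).
  rewrite (du_plus (fun x y => x) P). rewrite du_id. reflexivity. apply exd_id. exact pu. }
assert (FA11w : d_w (fun x y => e11 (A x y)) a b = d_w P a b).
{ rewrite (dw_loc D _ (fun x y => x + P x y) a b HDo Hab) by (intros; apply KA; auto).
  rewrite (dw_plus (fun x y => x) P). rewrite dw_id. ring. apply (ex_derive_const a b). exact pw. }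
assert (FA12u : d_u (fun x y => e12 (A x y)) a b = d_u Q a b).
{ apply (du_loc D). exact HDo. exact Hab. intros; apply KA; auto. }
assert (FA12w : d_w (fun x y => e12 (A x y)) a b = d_w Q a b).
{ apply (dw_loc D). exact HDo. exact Hab. intros; apply KA; auto. }
assert (FA21u : d_u (fun x y => e21 (A x y)) a b = d_u Q a b * P a b + Q a b * d_u P a b).
{ rewrite (du_loc D _ (fun x y => Q x y * P x y) a b HDo Hab) by (intros; apply KA; auto).
  apply (du_mult Q P). exact qu. exact pu. }
assert (FA21w : d_w (fun x y => e21 (A x y)) a b = d_w Q a b * P a b + Q a b * d_w P a b).
{ rewrite (dw_loc D _ (fun x y => Q x y * P x y) a b HDo Hab) by (intros; apply KA; auto).
  apply (dw_mult Q P). exact qw. exact pw. }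
assert (FA22u : d_u (fun x y => e22 (A x y)) a b = 1 + (d_u P a b + (d_u Q a b * Q a b + Q a b * d_u Q a b))).
{ rewrite (du_loc D _ (fun x y => x + (P x y + Q x y * Q x y)) a b HDo Hab) by (intros; apply KA; auto).
  rewrite (du_plus (fun x y => x) (fun x y => P x y + Q x y * Q x y)).
  rewrite du_id.
  rewrite (du_plus P (fun x y => Q x y * Q x y)).
  rewrite (du_mult Q Q). reflexivity.
  exact qu. exact qu. exact pu. apply (exd_mult (fun s => Q s b) (fun s => Q s b)); exact qu.
  apply exd_id.
  apply (exd_plus (fun s => P s b) (fun s => Q s b * Q s b)). exact pu.
  apply (exd_mult (fun s => Q s b) (fun s => Q s b)); exact qu. }
assert (FA22w : d_w (fun x y => e22 (A x y)) a b = d_w P a b + (d_w Q a b * Q a b + Q a b * d_w Q a b)).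
{ rewrite (dw_loc D _ (fun x y => x + (P x y + Q x y * Q x y)) a b HDo Hab) by (intros; apply KA; auto).
  rewrite (dw_plus (fun x y => x) (fun x y => P x y + Q x y * Q x y)).
  rewrite dw_id.
  rewrite (dw_plus P (fun x y => Q x y * Q x y)).
  rewrite (dw_mult Q Q). ring.
  exact qw. exact qw. exact pw. apply (exd_mult (fun s => Q a s) (fun s => Q a s)); exact qw.
  apply (ex_derive_const a b).
  apply (exd_plus (fun s => P a s) (fun s => Q a s * Q a s)). exact pw.
  apply (exd_mult (fun s => Q a s) (fun s => Q a s)); exact qw. }
assert (FB11u : d_u (fun x y => e11 (B x y)) a b = 0).
{ rewrite (du_loc D _ (fun x y => 0) a b HDo Hab) by (intros; apply Hcp; auto). apply du_cst. }
assert (FB11w : d_w (fun x y => e11 (B x y)) a b = 0).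
{ rewrite (dw_loc D _ (fun x y => 0) a b HDo Hab) by (intros; apply Hcp; auto). apply dw_cst. }
assert (FB12u : d_u (fun x y => e12 (B x y)) a b = 0).
{ rewrite (du_loc D _ (fun x y => 1) a b HDo Hab) by (intros; apply Hcp; auto). apply du_cst. }
assert (FB12w : d_w (fun x y => e12 (B x y)) a b = 0).
{ rewrite (dw_loc D _ (fun x y => 1) a b HDo Hab) by (intros; apply Hcp; auto). apply dw_cst. }
destruct (cAB a b Hab) as [_ Hx]. specialize (Hx (0,1)).
unfold vadd, mapp, ddir in Hx. cbn [fst snd e11 e12 e21 e22] in Hx.
injection Hx as E1 E2.
rewrite FA11u, FA11w, FA12u, FA12w, FA21u, FA21w, FA22u, FA22w, FB11u, FB11w, FB12u, FB12w in E1, E2.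
destruct (KA a b Hab) as [k1 [k2 [k3 k4]]]. destruct (Hcp a b Hab) as [h1 [h2 _]].
rewrite k1, k2, k3, k4, h1, h2 in E1, E2.
unfold P, Q in *. cbv beta in E1, E2.
assert (d_w (fun x y => e21 (B x y)) a b = d_u (fun x y => e22 (B x y)) a b /\
  d_u (fun x y => e21 (B x y)) a b + e22 (B a b) * d_w (fun x y => e21 (B x y)) a b
  - e21 (B a b) * d_w (fun x y => e22 (B x y)) a b + 1 = 0) as [R1 R2].
{ split; nra. }
split; assumption.
Qed.


Lemma keyBC D A B C : open2 D -> C1on D (fun x y => e21 (B x y)) -> C1on D (fun x y => e22 (B x y)) ->
  C1on D (fun x y => e11 (C x y)) -> C1on D (fun x y => e12 (C x y)) ->
  commuting D B C -> dKP_compatible D A B -> forall a b, D a b ->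
  d_w (fun x y => e11 (C x y)) a b = d_u (fun x y => e12 (C x y)) a b /\
  d_u (fun x y => e11 (C x y)) a b + e22 (B a b) * d_w (fun x y => e11 (C x y)) a b
  - e21 (B a b) * d_w (fun x y => e12 (C x y)) a b = 0.
Proof.
intros HDo Cp Cq Cb Cg cBC Hcp.
assert (KC : forall a b, D a b -> e21 (C a b) = e12 (C a b) * e21 (B a b) /\
     e22 (C a b) = e11 (C a b) + e22 (B a b) * e12 (C a b)).
{ intros a b Hab. destruct (Hcp a b Hab) as [h1 [h2 _]].
  destruct (cBC a b Hab) as [E _].
  pose proof (f_equal e11 E) as E1. pose proof (f_equal e12 E) as E2. simpl in E1, E2.
  rewrite h1, h2 in E1, E2. split; nra. }
intros a b Hab.
destruct (Cp a b Hab) as [pu [pw _]]. destruct (Cq a b Hab) as [qu [qw _]].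
destruct (Cb a b Hab) as [bu [bw _]]. destruct (Cg a b Hab) as [gu [gw _]].
set (P := fun x y => e21 (B x y)). set (Q := fun x y => e22 (B x y)).
set (Be := fun x y => e11 (C x y)). set (Ga := fun x y => e12 (C x y)).
assert (FC21u : d_u (fun x y => e21 (C x y)) a b = d_u Ga a b * P a b + Ga a b * d_u P a b).
{ rewrite (du_loc D _ (fun x y => Ga x y * P x y) a b HDo Hab) by (intros; apply KC; auto).
  apply (du_mult Ga P). exact gu. exact pu. }
assert (FC21w : d_w (fun x y => e21 (C x y)) a b = d_w Ga a b * P a b + Ga a b * d_w P a b).
{ rewrite (dw_loc D _ (fun x y => Ga x y * P x y) a b HDo Hab) by (intros; apply KC; auto).
  apply (dw_mult Ga P). exact gw. exact pw. }
assert (FC22u : d_u (fun x y => e22 (C x y)) a b = d_u Be a b + (d_u Q a b * Ga a b + Q a b * d_u Ga a b)).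
{ rewrite (du_loc D _ (fun x y => Be x y + Q x y * Ga x y) a b HDo Hab) by (intros; apply KC; auto).
  rewrite (du_plus Be (fun x y => Q x y * Ga x y)).
  rewrite (du_mult Q Ga). reflexivity. exact qu. exact gu. exact bu.
  apply (exd_mult (fun s => Q s b) (fun s => Ga s b)). exact qu. exact gu. }
assert (FC22w : d_w (fun x y => e22 (C x y)) a b = d_w Be a b + (d_w Q a b * Ga a b + Q a b * d_w Ga a b)).
{ rewrite (dw_loc D _ (fun x y => Be x y + Q x y * Ga x y) a b HDo Hab) by (intros; apply KC; auto).
  rewrite (dw_plus Be (fun x y => Q x y * Ga x y)).
  rewrite (dw_mult Q Ga). reflexivity. exact qw. exact gw. exact bw.
  apply (exd_mult (fun s => Q a s) (fun s => Ga a s)). exact qw. exact gw. }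
assert (FB11u : d_u (fun x y => e11 (B x y)) a b = 0).
{ rewrite (du_loc D _ (fun x y => 0) a b HDo Hab) by (intros; apply Hcp; auto). apply du_cst. }
assert (FB11w : d_w (fun x y => e11 (B x y)) a b = 0).
{ rewrite (dw_loc D _ (fun x y => 0) a b HDo Hab) by (intros; apply Hcp; auto). apply dw_cst. }
assert (FB12u : d_u (fun x y => e12 (B x y)) a b = 0).
{ rewrite (du_loc D _ (fun x y => 1) a b HDo Hab) by (intros; apply Hcp; auto). apply du_cst. }
assert (FB12w : d_w (fun x y => e12 (B x y)) a b = 0).
{ rewrite (dw_loc D _ (fun x y => 1) a b HDo Hab) by (intros; apply Hcp; auto). apply dw_cst. }
destruct (cBC a b Hab) as [_ Hx]. specialize (Hx (0,1)).
unfold vadd, mapp, ddir in Hx. cbn [fst snd e11 e12 e21 e22] in Hx.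
injection Hx as E1 E2.
rewrite FC21u, FC21w, FC22u, FC22w, FB11u, FB11w, FB12u, FB12w in E1, E2.
destruct (KC a b Hab) as [k1 k2]. destruct (Hcp a b Hab) as [h1 [h2 _]].
rewrite k1, k2, h1, h2 in E1, E2.
unfold P, Q, Be, Ga in *. cbv beta in E1, E2.
split; nra.
Qed.


Theorem proposition1 (D : R -> R -> Prop) (O : R -> R -> R -> Prop)
    (u w : R -> R -> R -> R) :
  open2 D -> convex2 D -> open3 O ->
  two_phase_solution D O u w ->
  exists z m : R -> R -> R,
    twice_diff D z /\ twice_diff D m /\
    (forall a b, D a b ->
       d_u (d_u z) a b + d_w z a b * d_w (d_u z) a b
         - d_u z a b * d_w (d_w z) a b + 1 = 0 /\
       d_u (d_u m) a b + d_w z a b * d_w (d_u m) a b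
         - d_u z a b * d_w (d_w m) a b = 0) /\
    (forall x y t, O x y t ->
       x + (d_u z (u x y t) (w x y t) + u x y t) * t = d_u m (u x y t) (w x y t) /\
       y + d_w z (u x y t) (w x y t) * t = d_w m (u x y t) (w x y t)).
Proof.
  intros HDo HDc _ [A [B [C [CA [CB [CC [Hcp [cAB [_ [cBC [HOD [_ [_ [_ Hhod]]]]]]]]]]]]]].
  destruct CB as [_ [_ [Cp Cq]]]. destruct CC as [Cb [Cg _]].
  pose proof (keyAB D A B HDo Cp Cq cAB Hcp) as KAB.
  pose proof (keyBC D A B C HDo Cp Cq Cb Cg cBC Hcp) as KBC.
  destruct (poincare D _ _ HDo HDc Cp Cq (fun a b H => proj1 (KAB a b H))) as [z Hz].
  destruct (poincare D _ _ HDo HDc Cb Cg (fun a b H => proj1 (KBC a b H))) as [m Hm].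
  assert (zu : forall a b, D a b -> d_u z a b = e21 (B a b)).
  { intros a b H. unfold d_u. apply is_derive_unique. apply (proj1 (Hz a b H)). }
  assert (zw : forall a b, D a b -> d_w z a b = e22 (B a b)).
  { intros a b H. unfold d_w. apply is_derive_unique. apply (proj2 (Hz a b H)). }
  assert (mu : forall a b, D a b -> d_u m a b = e11 (C a b)).
  { intros a b H. unfold d_u. apply is_derive_unique. apply (proj1 (Hm a b H)). }
  assert (mw : forall a b, D a b -> d_w m a b = e12 (C a b)).
  { intros a b H. unfold d_w. apply is_derive_unique. apply (proj2 (Hm a b H)). }
  exists z, m. split; [|split; [|split]].
  - intros a b H. split; [|split; [|split; [|split]]].
    + exists (e21 (B a b)). apply (proj1 (Hz a b H)).
    + exists (e22 (B a b)). apply (proj2 (Hz a b H)).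
    + apply (ex_derive_ext_loc (fun s => e21 (B s b))).
      { destruct (open_loc1 D a b HDo H) as [e He]. exists e. intros y Hy.
        symmetry. apply zu, He, Hy. }
      apply (Cp a b H).
    + apply (ex_derive_ext_loc (fun s => e21 (B a s))).
      { destruct (open_loc2 D a b HDo H) as [e He]. exists e. intros y Hy.
        symmetry. apply zu, He, Hy. }
      apply (Cp a b H).
    + apply (ex_derive_ext_loc (fun s => e22 (B a s))).
      { destruct (open_loc2 D a b HDo H) as [e He]. exists e. intros y Hy.
        symmetry. apply zw, He, Hy. }
      apply (Cq a b H).
  - intros a b H. split; [|split; [|split; [|split]]].
    + exists (e11 (C a b)). apply (proj1 (Hm a b H)).
    + exists (e12 (C a b)). apply (proj2 (Hm a b H)).
    + apply (ex_derive_ext_loc (fun s => e11 (C s b))).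
      { destruct (open_loc1 D a b HDo H) as [e He]. exists e. intros y Hy.
        symmetry. apply mu, He, Hy. }
      apply (Cb a b H).
    + apply (ex_derive_ext_loc (fun s => e11 (C a s))).
      { destruct (open_loc2 D a b HDo H) as [e He]. exists e. intros y Hy.
        symmetry. apply mu, He, Hy. }
      apply (Cb a b H).
    + apply (ex_derive_ext_loc (fun s => e12 (C a s))).
      { destruct (open_loc2 D a b HDo H) as [e He]. exists e. intros y Hy.
        symmetry. apply mw, He, Hy. }
      apply (Cg a b H).
  - intros a b H.
    rewrite (du_loc D (d_u z) (fun x y => e21 (B x y)) a b HDo H zu).
    rewrite (dw_loc D (d_u z) (fun x y => e21 (B x y)) a b HDo H zu).
    rewrite (dw_loc D (d_w z) (fun x y => e22 (B x y)) a b HDo H zw).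
    rewrite (du_loc D (d_u m) (fun x y => e11 (C x y)) a b HDo H mu).
    rewrite (dw_loc D (d_u m) (fun x y => e11 (C x y)) a b HDo H mu).
    rewrite (dw_loc D (d_w m) (fun x y => e12 (C x y)) a b HDo H mw).
    rewrite (zu a b H), (zw a b H).
    destruct (KAB a b H) as [_ K1]. destruct (KBC a b H) as [_ K2].
    split; lra.
  - intros x y t HO. pose proof (HOD x y t HO) as HD.
    rewrite (zu _ _ HD), (zw _ _ HD), (mu _ _ HD), (mw _ _ HD).
    destruct (Hhod x y t HO) as [h1 [h2 _]].
    destruct (Hcp _ _ HD) as [c1 [c2 [c3 c4]]].
    rewrite c1, c2, c3, c4 in *.
    split; [rewrite <- h1 | rewrite <- h2]; ring.
Qed.
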